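(* Let $f$ be a good piecewise expanding $C^1$ unimodal map. Suppose $(f_n)$ is a sequence of piecewise expanding $C^1$ unimodal maps with $|f_n-f|_1\to0$, and $v_n,v\in\mathcal B^0(I)$ satisfy $|v_n-v|_0\to0$ and $J(f_n,v_n)=0$ for all $n$. Then $J(f,v)=0$.
   Context: Let $I=[-1,1]$ and $c=0$. For $k\ge0$, $\mathcal B^k(I)$ is the Banach space of continuous $f:I\to\mathbb R$ that are $C^k$ on $[-1,0]$ and on $[0,1]$ with $f(1)=f(-1)$, normed by $|f|_k=\max\{|f|_{C^k[-1,0]},|f|_{C^k[0,1]}\}$, $|f|_{C^k(Q)}=\max_{0\le i\le k}\sup_Q|D^if|$. A piecewise expanding $C^1$ unimodal map is an $f\in\mathcal B^1(I)$ with $f(-1)=f(1)=-1$, $\inf_{x\in[-1,0]}Df(x)>1$, $\sup_{x\in[0,1]}Df(x)<-1$ and $f(0)\le1$. Such $f$ is good if either $c$ is not periodic, or $c$ has prime period $p\ge2$ and $|Df^{p-1}(f(c))|\min\{|Df^+(c)|,|Df^-(c)|\}>2$ ($Df^\pm(c)$ one-sided derivatives at $c$). For bounded $v:I\to\mathbb R$: if $c$ is not periodic for $f$, $J(f,v)=\sum_{i=0}^\infty \frac{v(f^i(c))}{Df^i(f(c))}$; if $c$ has prime period $p$, $J(f,v)=\sum_{i=0}^{p-1}\frac{v(f^i(c))}{Df^i(f(c))}$. *)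

(* Defs.v *)
From Stdlib Require Import Reals Lra ClassicalEpsilon.
From Coquelicot Require Import Coquelicot.
Open Scope R_scope.

Fixpoint iter (n : nat) (f : R -> R) (x : R) : R :=
  match n with O => x | S m => f (iter m f x) end.

Fixpoint fsum (n : nat) (g : nat -> R) : R :=
  match n with O => 0 | S m => fsum m g + g m end.

Definition inI (a b x : R) : Prop := a <= x <= b.

Definition has_deriv_within (a b : R) (g : R -> R) (x d : R) : Prop :=
  filterlim (fun y => (g y - g x) / (y - x))
    (within (fun y => inI a b y /\ y <> x) (locally x)) (locally d).

Definition cont_within (a b : R) (g : R -> R) (x : R) : Prop :=
  filterlim g (within (inI a b) (locally x)) (locally (g x)).

Definition C1_on (a b : R) (g dg : R -> R) : Prop :=
  forall x, inI a b x ->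
    cont_within a b g x /\ has_deriv_within a b g x (dg x) /\ cont_within a b dg x.

Definition in_B1 (g dl dr : R -> R) : Prop :=
  (forall x, inI (-1) 1 x -> cont_within (-1) 1 g x) /\
  C1_on (-1) 0 g dl /\ C1_on 0 1 g dr /\ g 1 = g (-1).

Definition in_B0 (v : R -> R) : Prop :=
  (forall x, inI (-1) 1 x -> cont_within (-1) 1 v x) /\ v 1 = v (-1).

(* piecewise expanding C^1 unimodal map, c = 0 *)
Definition pw_expanding_unimodal (f dl dr : R -> R) : Prop :=
  in_B1 f dl dr /\ f (-1) = -1 /\ f 1 = -1 /\
  (exists lam, lam > 1 /\ forall x, inI (-1) 0 x -> dl x >= lam) /\
  (exists lam, lam < -1 /\ forall x, inI 0 1 x -> dr x <= lam) /\
  f 0 <= 1.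

(* the derivative Df, using dl on [-1,0] and dr on (0,1]; the value at c = 0
   is never used in the formulas below except through one-sided derivatives *)
Definition pwD (dl dr : R -> R) (x : R) : R :=
  if Rle_dec x 0 then dl x else dr x.

Fixpoint Dn (i : nat) (f dl dr : R -> R) (y : R) : R :=
  match i with O => 1 | S j => Dn j f dl dr y * pwD dl dr (iter j f y) end.

Definition is_period (f : R -> R) (p : nat) : Prop :=
  (p > 0)%nat /\ iter p f 0 = 0.

Definition prime_period (f : R -> R) (p : nat) : Prop :=
  is_period f p /\ forall q, is_period f q -> (p <= q)%nat.

Definition c_periodic (f : R -> R) : Prop := exists p, is_period f p.

Definition good (f dl dr : R -> R) : Prop :=
  ~ c_periodic f \/
  exists p, (p >= 2)%nat /\ prime_period f p /\
    Rabs (Dn (p - 1) f dl dr (f 0)) * Rmin (Rabs (dr 0)) (Rabs (dl 0)) > 2.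

Definition J (f dl dr v : R -> R) : R :=
  match excluded_middle_informative (exists p, prime_period f p) with
  | left H =>
      let p := proj1_sig (constructive_indefinite_description _ H) in
      fsum p (fun i => v (iter i f 0) / Dn i f dl dr (f 0))
  | right _ =>
      Series (fun i => v (iter i f 0) / Dn i f dl dr (f 0))
  end.

Definition conv_B1 (gn dln drn : nat -> R -> R) (g dl dr : R -> R) : Prop :=
  forall eps, eps > 0 -> exists N, forall n, (n >= N)%nat ->
    (forall x, inI (-1) 0 x -> Rabs (gn n x - g x) <= eps /\ Rabs (dln n x - dl x) <= eps) /\
    (forall x, inI 0 1 x -> Rabs (gn n x - g x) <= eps /\ Rabs (drn n x - dr x) <= eps).

Definition conv_B0 (vn : nat -> R -> R) (v : R -> R) : Prop :=
  forall eps, eps > 0 -> exists N, forall n, (n >= N)%nat ->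
    forall x, inI (-1) 1 x -> Rabs (vn n x - v x) <= eps.

(* Main.v *)
Require Import Defs.
From Stdlib Require Import Reals Lra Lia ClassicalEpsilon Classical.
From Coquelicot Require Import Coquelicot.
Open Scope R_scope.

Lemma cont_within_ed a b g x : cont_within a b g x ->
  forall eps, eps > 0 -> exists del, del > 0 /\
   forall y, inI a b y -> Rabs (y - x) < del -> Rabs (g y - g x) < eps.
Proof.
  intros H eps He. unfold cont_within in H.
  apply filterlim_locally with (eps := mkposreal eps He) in H.
  destruct H as [[del Hd] H]. exists del. split. exact Hd.
  intros y Hy Hyx. apply (H y). apply Hyx. exact Hy.
Qed.

Lemma deriv_ed a b g x d : has_deriv_within a b g x d ->
  forall eps, eps > 0 -> exists del, del > 0 /\
   forall y, inI a b y -> y <> x -> Rabs (y - x) < del -> Rabs ((g y - g x)/(y - x) - d) < eps.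
Proof.
  intros H eps He. unfold has_deriv_within in H.
  apply filterlim_locally with (eps := mkposreal eps He) in H.
  destruct H as [[del Hd] H]. exists del. split. exact Hd.
  intros y Hy Hyx Hd2. apply (H y). apply Hd2. split; assumption.
Qed.

Lemma deriv_interior a b g x d : has_deriv_within a b g x d -> a < x < b ->
  derivable_pt_lim g x d.
Proof.
  intros H Hx eps He. destruct (deriv_ed _ _ _ _ _ H eps He) as [del [Hd H1]].
  assert (Hp : 0 < Rmin del (Rmin (x - a) (b - x))).
  { apply Rmin_pos; [lra| apply Rmin_pos; lra]. }
  exists (mkposreal _ Hp). intros h Hh Hlt. simpl in Hlt.
  assert (Hm1 := Rmin_l del (Rmin (x - a) (b - x))).
  assert (Hm2 := Rmin_r del (Rmin (x - a) (b - x))).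
  assert (Hm3 := Rmin_l (x - a) (b - x)).
  assert (Hm4 := Rmin_r (x - a) (b - x)).
  assert (Hh2 := Rabs_le_between' h 0 (Rabs h)).
  rewrite Rminus_0_r in Hh2.
  destruct (Rabs_def2 h _ Hlt).
  replace h with (x + h - x) at 2 by ring.
  apply H1.
  - unfold inI; split; lra.
  - intro E. apply Hh. lra.
  - replace (x + h - x) with h by ring. lra.
Qed.

Lemma mono_gen a b g dg s : a < b ->
  (forall x, inI a b x -> cont_within a b g x /\ has_deriv_within a b g x (dg x)) ->
  (forall x, inI a b x -> s * dg x > 0) ->
  forall x y, inI a b x -> inI a b y -> x <= y -> s * (g y - g x) >= 0.
Proof.
  intros Hab Hg Hs x y Hx Hy Hxy.
  destruct (Req_dec x y) as [E|Hne]. { subst. lra. }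
  apply Rnot_lt_ge. intro Hc.
  set (eta := - (s * (g y - g x)) / 2).
  assert (Heta : eta > 0) by (unfold eta; lra).
  set (h := eta / (Rabs s + 1)).
  assert (Hsp : Rabs s + 1 > 0) by (pose proof (Rabs_pos s); lra).
  assert (Hh : h > 0) by (unfold h; apply Rdiv_lt_0_compat; lra).
  assert (Hsh : Rabs s * h < eta).
  { unfold h. apply Rmult_lt_reg_r with (Rabs s + 1). lra.
    field_simplify. 2: lra. nra. }
  destruct (cont_within_ed _ _ _ _ (proj1 (Hg x Hx)) h Hh) as [d1 [Hd1 H1]].
  destruct (cont_within_ed _ _ _ _ (proj1 (Hg y Hy)) h Hh) as [d2 [Hd2 H2]].
  set (t := Rmin (Rmin d1 d2) ((y - x) / 3) / 2).
  assert (Ht0 : 0 < Rmin (Rmin d1 d2) ((y - x) / 3)).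
  { apply Rmin_pos; [apply Rmin_pos; lra| lra]. }
  assert (Htp : t > 0) by (unfold t; lra).
  assert (Htl : t < Rmin (Rmin d1 d2) ((y-x)/3)) by (unfold t; lra).
  assert (Hm1 := Rmin_l (Rmin d1 d2) ((y - x) / 3)).
  assert (Hm2 := Rmin_r (Rmin d1 d2) ((y - x) / 3)).
  assert (Hm3 := Rmin_l d1 d2). assert (Hm4 := Rmin_r d1 d2).
  unfold inI in *.
  assert (Ex : Rabs (g (x + t) - g x) < h).
  { apply H1. split; lra. replace (x + t - x) with t by ring. rewrite Rabs_right; lra. }
  assert (Ey : Rabs (g (y - t) - g y) < h).
  { apply H2. split; lra. replace (y - t - y) with (- t) by ring.
    rewrite Rabs_Ropp, Rabs_right; lra. }
  destruct (MVT_cor2 g dg (x + t) (y - t)) as [c [Hc1 Hc2]].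
  - lra.
  - intros c Hcc. apply deriv_interior with a b. apply (proj2 (Hg c ltac:(split; lra))). lra.
  - assert (Hsc := Hs c ltac:(split; lra)).
    assert (P : s * (g (y - t) - g (x + t)) > 0).
    { rewrite Hc1. replace (s * (dg c * (y - t - (x + t)))) with ((s * dg c) * (y - t - (x+t))) by ring.
      apply Rmult_gt_0_compat; lra. }
    assert (Q1 : Rabs (s * (g (y - t) - g y)) < eta).
    { rewrite Rabs_mult. pose proof (Rabs_pos s).
      apply Rle_lt_trans with (Rabs s * h); [apply Rmult_le_compat_l; lra | lra]. }
    assert (Q2 : Rabs (s * (g (x + t) - g x)) < eta).
    { rewrite Rabs_mult. pose proof (Rabs_pos s).
      apply Rle_lt_trans with (Rabs s * h); [apply Rmult_le_compat_l; lra | lra]. }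
    destruct (Rabs_def2 _ _ Q1). destruct (Rabs_def2 _ _ Q2).
    unfold eta in *. lra.
Qed.

Lemma image_I g dl dr : pw_expanding_unimodal g dl dr ->
  forall x, inI (-1) 1 x -> inI (-1) 1 (g x).
Proof.
  intros [[Hc [Hl [Hr H1]]] [Hm1 [Hp1 [[l1 [Hl1 Hl1']] [[l2 [Hl2 Hl2']] H0]]]]] x Hx.
  unfold inI in *. destruct (Rle_dec x 0) as [Hx0|Hx0].
  - assert (M := mono_gen (-1) 0 g dl 1 ltac:(lra)
      (fun x Hx => conj (proj1 (Hl x Hx)) (proj1 (proj2 (Hl x Hx))))
      (fun x Hx => ltac:(specialize (Hl1' x Hx); lra))).
    assert (A1 := M (-1) x ltac:(unfold inI; lra) ltac:(unfold inI; lra) ltac:(lra)).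
    assert (A2 := M x 0 ltac:(unfold inI; lra) ltac:(unfold inI; lra) ltac:(lra)).
    lra.
  - assert (M := mono_gen 0 1 g dr (-1) ltac:(lra)
      (fun x Hx => conj (proj1 (Hr x Hx)) (proj1 (proj2 (Hr x Hx))))
      (fun x Hx => ltac:(specialize (Hl2' x Hx); lra))).
    assert (A1 := M 0 x ltac:(unfold inI; lra) ltac:(unfold inI; lra) ltac:(lra)).
    assert (A2 := M x 1 ltac:(unfold inI; lra) ltac:(unfold inI; lra) ltac:(lra)).
    lra.
Qed.

Lemma iter_I g dl dr : pw_expanding_unimodal g dl dr ->
  forall i x, inI (-1) 1 x -> inI (-1) 1 (iter i g x).
Proof.
  intros H i; induction i; intros x Hx; simpl; auto. apply (image_I g dl dr H). auto.
Qed.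

Lemma iter_add g a b x : iter (a + b) g x = iter a g (iter b g x).
Proof. induction a; simpl; auto. rewrite IHa. auto. Qed.

Lemma iter_Sr g n x : iter (S n) g x = iter n g (g x).
Proof. replace (S n) with (n + 1)%nat by lia. rewrite iter_add. reflexivity. Qed.

Lemma Dn_add a b g dl dr y : Dn (a + b) g dl dr y = Dn a g dl dr y * Dn b g dl dr (iter a g y).
Proof.
  induction b; simpl. rewrite Nat.add_0_r; ring.
  rewrite Nat.add_succ_r. simpl. rewrite IHb.
  replace (a + b)%nat with (b + a)%nat by lia. rewrite iter_add. ring.
Qed.

Lemma fsum_add a b g : fsum (a + b) g = fsum a g + fsum b (fun j => g (a + j)%nat).
Proof.
  induction b; simpl. rewrite Nat.add_0_r; ring.
  rewrite Nat.add_succ_r. simpl. rewrite IHb. ring.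
Qed.

Lemma fsum_blocks m p g : fsum (m * p) g = fsum m (fun k => fsum p (fun j => g (k * p + j)%nat)).
Proof.
  induction m; simpl. reflexivity.
  replace (p + m * p)%nat with (m * p + p)%nat by lia. rewrite fsum_add, IHm. reflexivity.
Qed.

Lemma fsum_ext n g h : (forall i, (i < n)%nat -> g i = h i) -> fsum n g = fsum n h.
Proof. induction n; simpl; intros H; auto. rewrite IHn, H; auto. Qed.

Lemma fsum_abs n g : Rabs (fsum n g) <= fsum n (fun i => Rabs (g i)).
Proof.
  induction n; simpl. rewrite Rabs_R0; lra.
  eapply Rle_trans. apply Rabs_triang. lra.
Qed.

Lemma fsum_le n g h : (forall i, (i < n)%nat -> g i <= h i) -> fsum n g <= fsum n h.
Proof. induction n; simpl; intros H. lra. assert (g n <= h n) by auto. assert (fsum n g <= fsum n h) by auto. lra. Qed.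

Lemma fsum_sum_n g n : fsum (S n) g = sum_n g n.
Proof.
  induction n. simpl. rewrite sum_O. ring.
  rewrite sum_Sn. rewrite <- IHn. simpl. reflexivity.
Qed.

Lemma fsum_geom_eq r n : r <> 1 -> fsum n (fun i => r ^ i) = (1 - r ^ n) / (1 - r).
Proof.
  intros Hr. induction n; simpl. field. intro; apply Hr; lra.
  rewrite IHn. field. intro; apply Hr; lra.
Qed.

Lemma fsum_geom r K L : 0 <= r < 1 -> (K <= L)%nat ->
  fsum L (fun i => r ^ i) - fsum K (fun i => r ^ i) <= r ^ K / (1 - r).
Proof.
  intros Hr HKL. rewrite !fsum_geom_eq by lra.
  assert (0 <= r^L) by (apply pow_le; lra).
  replace ((1 - r ^ L) / (1 - r) - (1 - r ^ K) / (1 - r)) with (r^K / (1-r) - r^L/(1-r)) by (field; lra).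
  assert (0 <= r^L/(1-r)) by (apply Rdiv_le_0_compat; lra). lra.
Qed.

Definition ev (P : nat -> Prop) := exists N, forall n, (n >= N)%nat -> P n.

Lemma ev_and P Q : ev P -> ev Q -> ev (fun n => P n /\ Q n).
Proof. intros [N1 H1] [N2 H2]. exists (max N1 N2). intros n Hn. split; [apply H1|apply H2]; lia. Qed.

Lemma ev_imp (P Q : nat -> Prop) : (forall n, P n -> Q n) -> ev P -> ev Q.
Proof. intros H [N HN]. exists N. auto. Qed.

Lemma ev_all (P : nat -> Prop) : (forall n, P n) -> ev P.
Proof. intros H. exists O. auto. Qed.

Lemma ev_forall_lt (P : nat -> nat -> Prop) K :
  (forall k, (k < K)%nat -> ev (P k)) -> ev (fun n => forall k, (k < K)%nat -> P k n).
Proof.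
  induction K; intros H. exists O. intros; lia.
  destruct (IHK (fun k Hk => H k ltac:(lia))) as [N1 H1].
  destruct (H K ltac:(lia)) as [N2 H2].
  exists (max N1 N2). intros n Hn k Hk.
  destruct (Nat.eq_dec k K). subst; apply H2; lia. apply H1; lia.
Qed.

Lemma cv_ev u l : Un_cv u l -> forall eps, eps > 0 -> ev (fun n => Rabs (u n - l) < eps).
Proof. intros H eps He. destruct (H eps He) as [N HN]. exists N. apply HN. Qed.

Lemma ev_cv u l : (forall eps, eps > 0 -> ev (fun n => Rabs (u n - l) < eps)) -> Un_cv u l.
Proof. intros H eps He. destruct (H eps He) as [N HN]. exists N. apply HN. Qed.

Lemma cv_div u w a b : Un_cv u a -> Un_cv w b -> b <> 0 -> Un_cv (fun n => u n / w n) (a / b).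
Proof.
  intros H1 H2 Hb. apply is_lim_seq_Reals. apply is_lim_seq_div'; auto; apply is_lim_seq_Reals; auto.
Qed.

Lemma cv_const c : Un_cv (fun _ => c) c.
Proof. intros eps He. exists O. intros. unfold R_dist. rewrite Rminus_diag, Rabs_R0. lra. Qed.

Lemma cv_fsum K (t : nat -> nat -> R) (t0 : nat -> R) :
  (forall i, (i < K)%nat -> Un_cv (fun n => t n i) (t0 i)) ->
  Un_cv (fun n => fsum K (t n)) (fsum K t0).
Proof.
  induction K; intros H; simpl. apply cv_const.
  apply CV_plus. apply IHK; auto. apply H; lia.
Qed.

Lemma unif_app a b (gn : nat -> R -> R) g yn y :
  (forall eps, eps > 0 -> ev (fun n => forall x, inI a b x -> Rabs (gn n x - g x) <= eps)) ->
  cont_within a b g y -> ev (fun n => inI a b (yn n)) -> Un_cv yn y ->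
  Un_cv (fun n => gn n (yn n)) (g y).
Proof.
  intros Hu Hc Hin Hy. apply ev_cv. intros eps He.
  destruct (cont_within_ed _ _ _ _ Hc (eps/2) ltac:(lra)) as [d [Hd Hd']].
  assert (E1 := Hu (eps/4) ltac:(lra)).
  assert (E2 := cv_ev _ _ Hy d Hd).
  generalize (ev_and _ _ Hin (ev_and _ _ E1 E2)). apply ev_imp.
  intros n [H1 [H2 H3]].
  specialize (H2 _ H1). specialize (Hd' _ H1 H3).
  replace (gn n (yn n) - g y) with ((gn n (yn n) - g (yn n)) + (g (yn n) - g y)) by ring.
  eapply Rle_lt_trans. apply Rabs_triang. lra.
Qed.

Lemma le_eps x B : (forall eps, eps > 0 -> x < B + eps) -> x <= B.
Proof. intros H. apply Rnot_lt_le. intro Hc. specialize (H ((x - B)/2) ltac:(lra)). lra. Qed.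

Lemma sum_f_fsum a n : sum_f_R0 a n = fsum (S n) a.
Proof. induction n; simpl. ring. rewrite IHn. simpl. ring. Qed.

Lemma tail_fsum (a : nat -> R) C r : 0 <= r < 1 -> (forall i, Rabs (a i) <= C * r ^ i) ->
  forall K L, (K <= L)%nat -> Rabs (fsum L a - fsum K a) <= C * (r ^ K / (1 - r)).
Proof.
  intros Hr Ha K L HKL.
  assert (HC : 0 <= C). { specialize (Ha O). simpl in Ha. pose proof (Rabs_pos (a O)). lra. }
  replace L with (K + (L - K))%nat by lia. rewrite fsum_add.
  replace (fsum K a + fsum (L - K) (fun j => a (K + j)%nat) - fsum K a) with
    (fsum (L - K) (fun j => a (K + j)%nat)) by ring.
  eapply Rle_trans. apply fsum_abs.
  eapply Rle_trans. apply fsum_le with (h := fun j => C * r ^ (K + j)). intros; apply Ha.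
  assert (E : forall m, fsum m (fun j => C * r ^ (K + j)) = C * (fsum (K + m) (fun i => r ^ i) - fsum K (fun i => r ^ i))).
  { intros m. induction m. rewrite Nat.add_0_r. simpl. ring. rewrite Nat.add_succ_r. simpl. rewrite IHm. ring. }
  rewrite E. apply Rmult_le_compat_l. auto. apply fsum_geom; auto; lia.
Qed.

Lemma tail_series (a : nat -> R) C r : 0 <= r < 1 -> (forall i, Rabs (a i) <= C * r ^ i) ->
  forall K, Rabs (Series a - fsum K a) <= C * (r ^ K / (1 - r)).
Proof.
  intros Hr Ha K.
  assert (Hex : ex_series a).
  { apply (@ex_series_le R_AbsRing R_CompleteNormedModule a (fun i => C * r ^ i)). intros n. apply Ha.
    apply (ex_series_scal_l C (fun n => r ^ n)). apply ex_series_geom. rewrite Rabs_right; lra. }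
  apply Series_correct in Hex. apply is_series_Reals in Hex.
  apply le_eps. intros eps He. destruct (Hex eps He) as [N HN].
  specialize (HN (max N K) ltac:(lia)). unfold R_dist in HN. rewrite sum_f_fsum in HN.
  assert (T := tail_fsum a C r Hr Ha K (S (max N K)) ltac:(lia)).
  replace (Series a - fsum K a) with ((fsum (S (Init.Nat.max N K)) a - fsum K a) - (fsum (S (Init.Nat.max N K)) a - Series a)) by ring.
  eapply Rle_lt_trans. apply Rabs_triang. rewrite Rabs_Ropp. lra.
Qed.

Definition T (g dlg drg w : R -> R) (i : nat) : R := w (iter i g 0) / Dn i g dlg drg (g 0).

Lemma prime_unique g p q : prime_period g p -> prime_period g q -> p = q.
Proof. intros [H1 H2] [H3 H4]. specialize (H2 q H3). specialize (H4 p H1). lia. Qed.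

Lemma J_cases g dlg drg w :
  (exists p, prime_period g p /\ J g dlg drg w = fsum p (T g dlg drg w)) \/
  ((~ exists p, prime_period g p) /\ J g dlg drg w = Series (T g dlg drg w)).
Proof.
  unfold J. destruct (excluded_middle_informative (exists p, prime_period g p)) as [H|H].
  - left. destruct (constructive_indefinite_description _ H) as [p Hp]. simpl. exists p. split; auto.
  - right. split; auto.
Qed.

Lemma J_approx g dlg drg w C r : 0 <= r < 1 -> (forall i, Rabs (T g dlg drg w i) <= C * r ^ i) ->
  forall K, (exists L, (1 <= L < K)%nat /\ iter L g 0 = 0 /\ J g dlg drg w = fsum L (T g dlg drg w))
   \/ Rabs (J g dlg drg w - fsum K (T g dlg drg w)) <= C * (r ^ K / (1 - r)).
Proof.
  intros Hr Ha K. destruct (J_cases g dlg drg w) as [[p [[[Hp1 Hp2] Hp3] E]]|[_ E]].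
  - destruct (Compare_dec.lt_dec p K). left. exists p. repeat split; auto; lia.
    right. rewrite E. apply tail_fsum; auto; lia.
  - right. rewrite E. apply tail_series; auto.
Qed.

Lemma exists_prime g : c_periodic g -> exists p, prime_period g p.
Proof.
  intros [p Hp].
  assert (H : forall n, forall p, (p <= n)%nat -> is_period g p -> exists q, prime_period g q).
  { induction n; intros p' Hle Hp'. destruct Hp'; lia.
    destruct (classic (exists q, (q < p')%nat /\ is_period g q)) as [[q [Hq1 Hq2]]|Hn].
    apply (IHn q); auto; lia.
    exists p'. split; auto. intros q Hq. destruct (Compare_dec.le_lt_dec p' q); auto. exfalso; apply Hn; eauto. }
  eapply H; eauto.
Qed.

Lemma cv_ext_ev u w l : Un_cv u l -> ev (fun n => u n = w n) -> Un_cv w l.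
Proof.
  intros H E. apply ev_cv. intros eps He. generalize (ev_and _ _ E (cv_ev _ _ H eps He)).
  apply ev_imp. intros n [E1 E2]. rewrite <- E1. auto.
Qed.

Lemma Dn_bound g dlg drg lam y : lam > 0 ->
  (forall x, inI (-1) 1 x -> Rabs (pwD dlg drg x) >= lam) ->
  (forall i, inI (-1) 1 (iter i g y)) ->
  forall i, Rabs (Dn i g dlg drg y) >= lam ^ i.
Proof.
  intros Hl Hd Hy i. induction i; simpl. rewrite Rabs_R1; lra.
  rewrite Rabs_mult. specialize (Hd _ (Hy i)). assert (0 < lam ^ i) by (apply pow_lt; lra).
  rewrite Rmult_comm. apply Rle_ge. apply Rmult_le_compat; lra.
Qed.

Lemma T_bound g dlg drg w M lam : lam > 0 -> M >= 0 -> pw_expanding_unimodal g dlg drg ->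
  (forall x, inI (-1) 1 x -> Rabs (w x) <= M) ->
  (forall x, inI (-1) 1 x -> Rabs (pwD dlg drg x) >= lam) ->
  forall i, Rabs (T g dlg drg w i) <= M * (/ lam) ^ i.
Proof.
  intros Hl HM Hg Hw Hd i. unfold T.
  assert (Hb := Dn_bound g dlg drg lam (g 0) Hl Hd
     (fun i => ltac:(rewrite <- iter_Sr; apply (iter_I _ _ _ Hg); unfold inI; lra)) i).
  assert (0 < lam ^ i) by (apply pow_lt; lra).
  unfold Rdiv. rewrite Rabs_mult, Rabs_inv. rewrite pow_inv.
  apply Rmult_le_compat. apply Rabs_pos. left; apply Rinv_0_lt_compat. lra.
  apply Hw. apply (iter_I _ _ _ Hg). unfold inI; lra.
  apply Rinv_le_contravar; lra.
Qed.

Lemma fsum_scal n c g : fsum n (fun i => c * g i) = c * fsum n g.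
Proof. induction n; simpl. ring. rewrite IHn. ring. Qed.

Lemma block_est (rho beta : nat -> R) S0 q eps B : 0 <= q < 1/2 -> eps >= 0 -> rho O = 1 ->
  (forall m, (m < B)%nat -> Rabs (rho (S m)) <= q * Rabs (rho m)) ->
  (forall m, (m < B)%nat -> Rabs (beta m - S0) <= eps) ->
  forall m, (1 <= m <= B)%nat ->
  Rabs (fsum m (fun k => rho k * beta k)) >= Rabs S0 * (2 - 1/(1-q)) - eps/(1-q).
Proof.
  intros Hq He H0 Hr Hb.
  set (A := fun m => fsum m (fun k => Rabs (rho k))).
  assert (I1 : forall m, (m <= B)%nat -> (1 - q) * A m + Rabs (rho m) <= 1).
  { induction m; intros Hm. unfold A; simpl. rewrite H0, Rabs_R1. lra.
    specialize (IHm ltac:(lia)). specialize (Hr m ltac:(lia)). unfold A in *; simpl. nra. }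
  assert (I2 : forall m, (1 <= m)%nat -> (m <= B)%nat -> Rabs (fsum m rho) >= 2 - A m).
  { induction m; intros H1 H2. lia. destruct m.
    unfold A; simpl. rewrite H0, Rplus_0_l, Rabs_R1. lra.
    specialize (IHm ltac:(lia) ltac:(lia)). unfold A in *.
    change (fsum (S (S m)) rho) with (fsum (S m) rho + rho (S m)).
    change (fsum (S (S m)) (fun k : nat => Rabs (rho k))) with
       (fsum (S m) (fun k : nat => Rabs (rho k)) + Rabs (rho (S m))).
    pose proof (Rabs_triang_inv (fsum (S m) rho) (- rho (S m))).
    rewrite Rabs_Ropp in H. unfold Rminus in H. rewrite Ropp_involutive in H. lra. }
  assert (I3 : forall m, (m <= B)%nat ->
     Rabs (fsum m (fun k => rho k * beta k) - S0 * fsum m rho) <= eps * A m).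
  { induction m; intros Hm. unfold A; simpl. rewrite Rmult_0_r, Rminus_0_r, Rabs_R0. lra.
    specialize (IHm ltac:(lia)). specialize (Hb m ltac:(lia)). unfold A in *; simpl.
    replace (fsum m (fun k : nat => rho k * beta k) + rho m * beta m - S0 * (fsum m rho + rho m))
      with ((fsum m (fun k : nat => rho k * beta k) - S0 * fsum m rho) + rho m * (beta m - S0)) by ring.
    eapply Rle_trans. apply Rabs_triang. rewrite Rabs_mult.
    assert (Rabs (rho m) * Rabs (beta m - S0) <= Rabs (rho m) * eps) by (apply Rmult_le_compat_l; [apply Rabs_pos|lra]).
    lra. }
  intros m [Hm1 Hm2]. specialize (I1 m Hm2). specialize (I2 m Hm1 Hm2). specialize (I3 m Hm2).
  assert (HA : A m <= 1 / (1 - q)).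
  { pose proof (Rabs_pos (rho m)). apply Rmult_le_reg_l with (1 - q). lra.
    field_simplify; lra. }
  assert (HA0 : 0 <= A m). { unfold A. clear. induction m; simpl. lra. pose proof (Rabs_pos (rho m)). lra. }
  assert (H : Rabs (S0 * fsum m rho) <= Rabs (fsum m (fun k => rho k * beta k)) +
      Rabs (fsum m (fun k => rho k * beta k) - S0 * fsum m rho)).
  { replace (S0 * fsum m rho) with (fsum m (fun k => rho k * beta k) -
      (fsum m (fun k => rho k * beta k) - S0 * fsum m rho)) at 1 by ring.
    eapply Rle_trans. apply Rabs_triang. rewrite Rabs_Ropp. lra. }
  rewrite Rabs_mult in H.
  assert (Rabs S0 * Rabs (fsum m rho) >= Rabs S0 * (2 - A m)).
  { apply Rle_ge. apply Rmult_le_compat_l. apply Rabs_pos. lra. }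
  assert (Rabs S0 * (2 - A m) >= Rabs S0 * (2 - 1/(1-q))).
  { apply Rle_ge. apply Rmult_le_compat_l. apply Rabs_pos. lra. }
  assert (eps * A m <= eps * (1/(1-q))) by (apply Rmult_le_compat_l; lra).
  unfold Rdiv in *. lra.
Qed.

Section Main.
Variables (f dl dr : R -> R) (fn dln drn : nat -> R -> R) (v : R -> R) (vn : nat -> R -> R).
Hypothesis Hf : pw_expanding_unimodal f dl dr.
Hypothesis Hfn : forall n, pw_expanding_unimodal (fn n) (dln n) (drn n).
Hypothesis HB1 : conv_B1 fn dln drn f dl dr.
Hypothesis Hv : in_B0 v.
Hypothesis HB0 : conv_B0 vn v.

Lemma uf : forall eps, eps > 0 -> ev (fun n => forall x, inI (-1) 1 x -> Rabs (fn n x - f x) <= eps).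
Proof.
  intros eps He. destruct (HB1 eps He) as [N HN]. exists N. intros n Hn x Hx.
  destruct (HN n Hn) as [H1 H2]. unfold inI in *. destruct (Rle_dec x 0).
  apply H1; unfold inI; lra. apply H2; unfold inI; lra.
Qed.

Lemma udl : forall eps, eps > 0 -> ev (fun n => forall x, inI (-1) 0 x -> Rabs (dln n x - dl x) <= eps).
Proof.
  intros eps He. destruct (HB1 eps He) as [N HN]. exists N. intros n Hn x Hx. apply HN; auto.
Qed.

Lemma udr : forall eps, eps > 0 -> ev (fun n => forall x, inI 0 1 x -> Rabs (drn n x - dr x) <= eps).
Proof.
  intros eps He. destruct (HB1 eps He) as [N HN]. exists N. intros n Hn x Hx. apply HN; auto.
Qed.

Lemma uv : forall eps, eps > 0 -> ev (fun n => forall x, inI (-1) 1 x -> Rabs (vn n x - v x) <= eps).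
Proof. intros eps He. destruct (HB0 eps He) as [N HN]. exists N. auto. Qed.

Lemma orbit_cv zn z : Un_cv zn z -> (forall n, inI (-1) 1 (zn n)) -> inI (-1) 1 z ->
  forall i, Un_cv (fun n => iter i (fn n) (zn n)) (iter i f z).
Proof.
  intros Hz Hzn Hzi i. induction i; simpl. auto.
  apply unif_app with (a := -1) (b := 1). apply uf.
  apply (proj1 (proj1 Hf)). apply (iter_I f dl dr Hf); auto.
  apply ev_all. intros n. apply (iter_I _ _ _ (Hfn n)); auto. auto.
Qed.

Lemma pwD_cv yn y : Un_cv yn y -> (forall n, inI (-1) 1 (yn n)) -> inI (-1) 1 y -> y <> 0 ->
  Un_cv (fun n => pwD (dln n) (drn n) (yn n)) (pwD dl dr y).
Proof.
  intros Hy Hyn Hyi H0. unfold pwD at 2. destruct (Rle_dec y 0) as [Hle|Hgt].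
  - assert (Hlt : y < 0) by lra.
    assert (E := cv_ev _ _ Hy (- y) ltac:(lra)).
    apply cv_ext_ev with (fun n => dln n (yn n)).
    + apply unif_app with (a := -1) (b := 0). apply udl.
      destruct (proj1 (proj2 (proj1 Hf))) with y as [_ [_ Hc]]. unfold inI in *; lra. exact Hc.
      generalize E. apply ev_imp. intros n Hn. specialize (Hyn n). unfold inI in *.
      destruct (Rabs_def2 _ _ Hn). lra. auto.
    + generalize E. apply ev_imp. intros n Hn. destruct (Rabs_def2 _ _ Hn).
      unfold pwD. destruct (Rle_dec (yn n) 0). auto. lra.
  - assert (Hlt : y > 0) by lra.
    assert (E := cv_ev _ _ Hy y ltac:(lra)).
    apply cv_ext_ev with (fun n => drn n (yn n)).
    + apply unif_app with (a := 0) (b := 1). apply udr.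
      destruct (proj1 (proj2 (proj2 (proj1 Hf)))) with y as [_ [_ Hc]]. unfold inI in *; lra. exact Hc.
      generalize E. apply ev_imp. intros n Hn. specialize (Hyn n). unfold inI in *.
      destruct (Rabs_def2 _ _ Hn). lra. auto.
    + generalize E. apply ev_imp. intros n Hn. destruct (Rabs_def2 _ _ Hn).
      unfold pwD. destruct (Rle_dec (yn n) 0). lra. auto.
Qed.

Lemma Dn_cv zn z : Un_cv zn z -> (forall n, inI (-1) 1 (zn n)) -> inI (-1) 1 z ->
  forall j, (forall k, (k < j)%nat -> iter k f z <> 0) ->
  Un_cv (fun n => Dn j (fn n) (dln n) (drn n) (zn n)) (Dn j f dl dr z).
Proof.
  intros Hz Hzn Hzi j. induction j; intros Hk; simpl. apply cv_const.
  apply CV_mult. apply IHj. intros; apply Hk; lia.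
  apply pwD_cv. apply orbit_cv; auto. intros n. apply (iter_I _ _ _ (Hfn n)); auto.
  apply (iter_I f dl dr Hf); auto. apply Hk; lia.
Qed.

Lemma lam_bound : exists lam1, lam1 > 1 /\
  (forall x, inI (-1) 1 x -> Rabs (pwD dl dr x) >= lam1) /\
  ev (fun n => forall x, inI (-1) 1 x -> Rabs (pwD (dln n) (drn n) x) >= lam1).
Proof.
  destruct Hf as [_ [_ [_ [[l1 [Hl1 Hl1']] [[l2 [Hl2 Hl2']] _]]]]].
  set (lam0 := Rmin l1 (- l2)).
  assert (Hm1 := Rmin_l l1 (- l2)). assert (Hm2 := Rmin_r l1 (- l2)).
  assert (H0 : lam0 > 1) by (unfold lam0; apply Rmin_Rgt_r; lra).
  exists ((1 + lam0) / 2). split. lra. split.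
  - intros x Hx. unfold pwD. unfold inI in *. destruct (Rle_dec x 0).
    + specialize (Hl1' x ltac:(unfold inI; lra)). rewrite Rabs_right; fold lam0 in Hm1; lra.
    + specialize (Hl2' x ltac:(unfold inI; lra)). rewrite Rabs_left; fold lam0 in Hm2; lra.
  - assert (E := ev_and _ _ (udl ((lam0 - 1)/2) ltac:(lra)) (udr ((lam0 - 1)/2) ltac:(lra))).
    generalize E. apply ev_imp. intros n [E1 E2] x Hx. unfold pwD. unfold inI in *.
    fold lam0 in Hm1, Hm2. destruct (Rle_dec x 0).
    + specialize (Hl1' x ltac:(unfold inI; lra)). specialize (E1 x ltac:(unfold inI; lra)).
      apply Rabs_le_between' in E1. rewrite Rabs_right; lra.
    + specialize (Hl2' x ltac:(unfold inI; lra)). specialize (E2 x ltac:(unfold inI; lra)).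
      apply Rabs_le_between' in E2. rewrite Rabs_left; lra.
Qed.

Lemma v_bounded : exists M, forall x, inI (-1) 1 x -> Rabs (v x) <= M.
Proof.
  set (cl := fun x => Rmax (-1) (Rmin 1 x)).
  assert (Hcl : forall x, inI (-1) 1 (cl x)).
  { intros x. unfold cl, inI. split. apply Rmax_l. apply Rmax_lub. lra. apply Rmin_l. }
  assert (Hcl2 : forall x, inI (-1) 1 x -> cl x = x).
  { intros x [H1 H2]. unfold cl. rewrite Rmin_right by lra. rewrite Rmax_right; lra. }
  assert (Hcl3 : forall x y, Rabs (cl y - cl x) <= Rabs (y - x)).
  { intros x y. unfold cl. unfold Rmax, Rmin.
    repeat (destruct Rle_dec); repeat (destruct Rle_dec); 
    try (rewrite Rminus_diag, Rabs_R0; apply Rabs_pos);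
    apply Rabs_le_between'; split; destruct (Rle_dec 0 (y - x)); 
    try (rewrite Rabs_right by lra; lra); try (rewrite Rabs_left by lra; lra). }
  destruct (@bounded_continuity R_AbsRing R_NormedModule (fun x => v (cl x)) (-1) 1) as [M HM].
  - intros x Hx. apply filterlim_locally. intros eps.
    destruct (cont_within_ed _ _ _ _ (proj1 Hv x Hx) eps (cond_pos eps)) as [d [Hd Hd']].
    exists (mkposreal d Hd). intros y Hy. simpl in Hy.
    change (Rabs (v (cl y) - v (cl x)) < eps). rewrite (Hcl2 x Hx).
    apply Hd'. auto. replace (cl y - x) with (cl y - cl x) by (rewrite (Hcl2 x Hx); reflexivity). eapply Rle_lt_trans. apply Hcl3. apply Hy.
  - exists M. intros x Hx. specialize (HM x Hx). rewrite (Hcl2 x Hx) in HM. apply Rlt_le. apply HM.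
Qed.

Lemma vn_bound : exists M, M >= 0 /\ (forall x, inI (-1) 1 x -> Rabs (v x) <= M) /\
  ev (fun n => forall x, inI (-1) 1 x -> Rabs (vn n x) <= M).
Proof.
  destruct v_bounded as [M HM]. exists (Rabs M + 1). split. pose proof (Rabs_pos M); lra.
  split. intros x Hx. specialize (HM x Hx). pose proof (Rle_abs M). lra.
  generalize (uv 1 ltac:(lra)). apply ev_imp. intros n Hn x Hx.
  specialize (Hn x Hx). specialize (HM x Hx). pose proof (Rle_abs M).
  replace (vn n x) with ((vn n x - v x) + v x) by ring.
  eapply Rle_trans. apply Rabs_triang. lra.
Qed.

Lemma near0 yn : Un_cv yn 0 -> (forall n, inI (-1) 1 (yn n)) ->
  forall eps, eps > 0 ->
  ev (fun n => Rabs (pwD (dln n) (drn n) (yn n)) >= Rmin (Rabs (dr 0)) (Rabs (dl 0)) - eps).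
Proof.
  intros Hy Hyn eps He.
  destruct (proj1 (proj2 (proj1 Hf))) with 0 as [_ [_ Hcl]]. unfold inI; lra.
  destruct (proj1 (proj2 (proj2 (proj1 Hf)))) with 0 as [_ [_ Hcr]]. unfold inI; lra.
  destruct (cont_within_ed _ _ _ _ Hcl (eps/2) ltac:(lra)) as [d1 [Hd1 H1]].
  destruct (cont_within_ed _ _ _ _ Hcr (eps/2) ltac:(lra)) as [d2 [Hd2 H2]].
  assert (E := ev_and _ _ (cv_ev _ _ Hy (Rmin d1 d2) ltac:(apply Rmin_pos; lra))
     (ev_and _ _ (udl (eps/2) ltac:(lra)) (udr (eps/2) ltac:(lra)))).
  generalize E. apply ev_imp. intros n [A [B C]]. rewrite Rminus_0_r in A.
  assert (Hm1 := Rmin_l d1 d2). assert (Hm2 := Rmin_r d1 d2).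
  assert (Hm3 := Rmin_l (Rabs (dr 0)) (Rabs (dl 0))). assert (Hm4 := Rmin_r (Rabs (dr 0)) (Rabs (dl 0))).
  specialize (Hyn n). unfold pwD, inI in *. destruct (Rle_dec (yn n) 0).
  - specialize (B (yn n) ltac:(lra)). assert (H1' := H1 (yn n) ltac:(lra) ltac:(rewrite Rminus_0_r; lra)).
    assert (Rabs (dl 0) <= Rabs (dln n (yn n)) + eps).
    { replace (dl 0) with (dln n (yn n) - (dln n (yn n) - dl (yn n)) - (dl (yn n) - dl 0)) by ring.
      eapply Rle_trans. apply Rabs_triang. rewrite Rabs_Ropp.
      eapply Rle_trans. apply Rplus_le_compat_r. apply Rabs_triang. rewrite Rabs_Ropp. lra. }
    lra.
  - specialize (C (yn n) ltac:(lra)). assert (H2' := H2 (yn n) ltac:(lra) ltac:(rewrite Rminus_0_r; lra)).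
    assert (Rabs (dr 0) <= Rabs (drn n (yn n)) + eps).
    { replace (dr 0) with (drn n (yn n) - (drn n (yn n) - dr (yn n)) - (dr (yn n) - dr 0)) by ring.
      eapply Rle_trans. apply Rabs_triang. rewrite Rabs_Ropp.
      eapply Rle_trans. apply Rplus_le_compat_r. apply Rabs_triang. rewrite Rabs_Ropp. lra. }
    lra.
Qed.

Lemma v_cv yn y : Un_cv yn y -> (forall n, inI (-1) 1 (yn n)) -> inI (-1) 1 y ->
  Un_cv (fun n => vn n (yn n)) (v y).
Proof.
  intros. apply unif_app with (-1) 1. apply uv. apply (proj1 Hv); auto. apply ev_all; auto. auto.
Qed.


Lemma Dnf_nz j y : inI (-1) 1 y -> Dn j f dl dr y <> 0.
Proof.
  intros Hy. destruct lam_bound as [lam [Hl [Hd _]]].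
  assert (H := Dn_bound f dl dr lam y ltac:(lra) Hd (fun i => iter_I f dl dr Hf i y Hy) j).
  assert (0 < lam ^ j) by (apply pow_lt; lra). intro E. rewrite E, Rabs_R0 in H. lra.
Qed.

Lemma s_cv zn z j : Un_cv zn z -> (forall n, inI (-1) 1 (zn n)) -> inI (-1) 1 z ->
  (forall k, (k < j)%nat -> iter k f (f z) <> 0) ->
  Un_cv (fun n => vn n (iter j (fn n) (zn n)) / Dn j (fn n) (dln n) (drn n) (fn n (zn n)))
        (v (iter j f z) / Dn j f dl dr (f z)).
Proof.
  intros Hz Hzn Hzi Hk.
  assert (Hfz : inI (-1) 1 (f z)) by (apply (image_I f dl dr Hf); auto).
  apply cv_div.
  - apply v_cv. apply orbit_cv; auto. intros n; apply (iter_I _ _ _ (Hfn n)); auto.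
    apply (iter_I f dl dr Hf); auto.
  - apply Dn_cv; auto. apply (orbit_cv zn z Hz Hzn Hzi 1).
    intros n; apply (image_I _ _ _ (Hfn n)); auto.
  - apply Dnf_nz; auto.
Qed.

Lemma T_cv_gen i : (forall k, (k < i)%nat -> iter (S k) f 0 <> 0) ->
  Un_cv (fun n => T (fn n) (dln n) (drn n) (vn n) i) (T f dl dr v i).
Proof.
  intros Hk. unfold T.
  apply (s_cv (fun _ => 0) 0 i (cv_const 0)). intros; unfold inI; lra. unfold inI; lra.
  intros k Hk'. rewrite <- iter_Sr. auto.
Qed.

Lemma orbit0_ev k : iter k f 0 <> 0 -> ev (fun n => iter k (fn n) 0 <> 0).
Proof.
  intros H. assert (C := orbit_cv (fun _ => 0) 0 (cv_const 0) (fun n => ltac:(unfold inI; lra)) ltac:(unfold inI; lra) k).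
  generalize (cv_ev _ _ C (Rabs (iter k f 0)) ltac:(apply Rabs_pos_lt; auto)).
  apply ev_imp. intros n Hn E. rewrite E in Hn. rewrite Rminus_0_l, Rabs_Ropp in Hn. lra.
Qed.

Lemma bounds_all : exists M r, M >= 0 /\ 0 <= r < 1 /\
  (forall i, Rabs (T f dl dr v i) <= M * r ^ i) /\
  ev (fun n => forall i, Rabs (T (fn n) (dln n) (drn n) (vn n) i) <= M * r ^ i).
Proof.
  destruct lam_bound as [lam [Hl [Hd Hdn]]]. destruct vn_bound as [M [HM [Hvb Hvn]]].
  exists M, (/ lam). split. auto. split. split. left; apply Rinv_0_lt_compat; lra.
  rewrite <- Rinv_1. apply Rinv_lt_contravar; lra.
  split. apply T_bound; auto; lra.
  generalize (ev_and _ _ Hdn Hvn). apply ev_imp. intros n [A B]. apply T_bound; auto; lra.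
Qed.

Lemma small_tail M r : M >= 0 -> 0 <= r < 1 -> forall eps, eps > 0 ->
  exists K, forall K', (K' >= K)%nat -> M * (r ^ K' / (1 - r)) < eps.
Proof.
  intros HM Hr eps He.
  destruct (pow_lt_1_zero r ltac:(rewrite Rabs_right; lra) (eps * (1 - r) / (M + 1)))
    as [K HK]. apply Rdiv_lt_0_compat; nra.
  exists K. intros K' HK'. specialize (HK K' HK'). rewrite Rabs_right in HK.
  2: apply Rle_ge, pow_le; lra.
  assert (0 <= r ^ K') by (apply pow_le; lra).
  apply Rmult_lt_reg_r with ((1 - r) * (M + 1)). nra.
  replace (M * (r ^ K' / (1 - r)) * ((1 - r) * (M + 1))) with (M * r^K' * (M+1)) by (field; lra).
  apply Rmult_lt_compat_r with (r := M + 1) in HK. 2: lra.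
  replace (eps * (1 - r) / (M + 1) * (M + 1)) with (eps * (1 - r)) in HK by (field; lra).
  nra.
Qed.

Lemma case1 : ~ c_periodic f ->
  (forall n, J (fn n) (dln n) (drn n) (vn n) = 0) -> J f dl dr v = 0.
Proof.
  intros Hnp HJ.
  destruct bounds_all as [M [r [HM [Hr [Hbf Hbn]]]]].
  assert (EJ : J f dl dr v = Series (T f dl dr v)).
  { destruct (J_cases f dl dr v) as [[p [Hp _]]|[_ E]]; auto.
    exfalso. apply Hnp. exists p. apply Hp. }
  assert (Hnz : forall k, (k >= 1)%nat -> iter k f 0 <> 0).
  { intros k Hk E. apply Hnp. exists k. split; auto. }
  apply Rabs_eq_0. apply Rle_antisym. 2: apply Rabs_pos.
  apply le_eps. intros eps He. rewrite Rplus_0_l.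
  destruct (small_tail M r HM Hr (eps/3) ltac:(lra)) as [K HK].
  specialize (HK K (le_n K)).
  assert (E1 : ev (fun n => forall k, (k < K)%nat -> (k >= 1)%nat -> iter k (fn n) 0 <> 0)).
  { apply ev_forall_lt. intros k Hk. destruct (Compare_dec.le_lt_dec 1 k).
    generalize (orbit0_ev k (Hnz k l)). apply ev_imp; auto.
    apply ev_all. intros; lia. }
  assert (E2 := cv_ev _ _ (cv_fsum K _ _ (fun i _ => T_cv_gen i (fun k _ => Hnz (S k) ltac:(lia)))) (eps/3) ltac:(lra)).
  destruct (ev_and _ _ E1 (ev_and _ _ E2 Hbn)) as [N HN].
  destruct (HN N (le_n N)) as [A [B C]].
  destruct (J_approx _ _ _ _ M r Hr C K) as [[L [HL1 [HL2 _]]]|HJn].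
  - exfalso. apply (A L); auto; lia.
  - rewrite HJ in HJn. rewrite Rminus_0_l, Rabs_Ropp in HJn.
    assert (Ht := tail_series _ M r Hr Hbf K). rewrite <- EJ in Ht.
    replace (J f dl dr v) with ((J f dl dr v - fsum K (T f dl dr v))
       - (fsum K (T (fn N) (dln N) (drn N) (vn N)) - fsum K (T f dl dr v))
       + fsum K (T (fn N) (dln N) (drn N) (vn N))) by ring.
    assert (B' : Rabs (fsum K (T (fn N) (dln N) (drn N) (vn N)) - fsum K (T f dl dr v)) < eps/3) by exact B.
    eapply Rle_lt_trans. apply Rabs_triang.
    eapply Rle_lt_trans. apply Rplus_le_compat_r. apply Rabs_triang. rewrite Rabs_Ropp. lra.
Qed.

Lemma iter_comm g n x : iter n g (g x) = g (iter n g x).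
Proof. rewrite <- iter_Sr. reflexivity. Qed.

Lemma T_block g dlg drg w k p j :
  T g dlg drg w (k * p + j) =
  / Dn (k * p) g dlg drg (g 0) *
  (w (iter j g (iter (k * p) g 0)) / Dn j g dlg drg (g (iter (k * p) g 0))).
Proof.
  unfold T. rewrite Dn_add. rewrite (Nat.add_comm (k * p) j), iter_add. rewrite iter_comm.
  unfold Rdiv. rewrite Rinv_mult. ring.
Qed.

Lemma Dn_block g dlg drg m p y :
  Dn (S m * p) g dlg drg y = Dn (m * p) g dlg drg y * Dn p g dlg drg (iter (m * p) g y).
Proof. replace (S m * p)%nat with (m * p + p)%nat by lia. apply Dn_add. Qed.

Lemma case2 p : (p >= 2)%nat -> prime_period f p ->
  Rabs (Dn (p - 1) f dl dr (f 0)) * Rmin (Rabs (dr 0)) (Rabs (dl 0)) > 2 ->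
  (forall n, J (fn n) (dln n) (drn n) (vn n) = 0) -> J f dl dr v = 0.
Proof.
  intros Hp2 Hpp Hgood HJ.
  assert (Hmp : forall m, iter (m * p) f 0 = 0).
  { induction m. reflexivity. replace (S m * p)%nat with (p + m * p)%nat by lia.
    rewrite iter_add, IHm. apply Hpp. }
  assert (Hper : forall m j, iter (m * p + j) f 0 = iter j f 0).
  { intros m j. rewrite Nat.add_comm, iter_add, Hmp. reflexivity. }
  assert (Hnzp : forall k, (0 < k < p)%nat -> iter k f 0 <> 0).
  { intros k Hk E. destruct Hpp as [_ Hmin]. assert (Hk2 : is_period f k) by (split; [lia|exact E]). specialize (Hmin k Hk2). lia. }
  assert (Hnzm : forall k, (k mod p <> 0)%nat -> iter k f 0 <> 0).
  { intros k Hk. rewrite (Nat.div_mod_eq k p), Nat.mul_comm, Hper. apply Hnzp.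
    split. lia. apply Nat.mod_upper_bound. lia. }
  set (S0 := fsum p (T f dl dr v)).
  assert (EJ : J f dl dr v = S0).
  { destruct (J_cases f dl dr v) as [[p' [Hp' E]]|[Hn _]].
    rewrite (prime_unique f p' p Hp' Hpp) in E. exact E.
    exfalso; apply Hn; eauto. }
  rewrite EJ.
  set (Lam := Dn (p - 1) f dl dr (f 0)) in *.
  set (mu := Rmin (Rabs (dr 0)) (Rabs (dl 0))) in *.
  assert (Hmu : 0 <= mu) by (unfold mu; apply Rmin_glb; apply Rabs_pos).
  assert (HLa : 0 <= Rabs Lam) by apply Rabs_pos.
  set (P := Rabs Lam * mu) in *.
  set (G := (P + 2) / 2).
  set (q := / G).
  assert (HG : G > 2) by (unfold G; lra).
  assert (Hq : 0 <= q < 1/2).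
  { unfold q. split. left; apply Rinv_0_lt_compat; lra.
    replace (1/2) with (/2) by field. apply Rinv_lt_contravar; lra. }
  set (kap := 2 - 1 / (1 - q)).
  assert (Hkap : kap > 0).
  { unfold kap. assert (1 / (1 - q) < 2). { apply Rmult_lt_reg_r with (1 - q). lra. field_simplify; lra. } lra. }
  destruct bounds_all as [M [r [HM [Hr [Hbf Hbn]]]]].
  set (z := fun n m => iter (m * p) (fn n) 0).
  assert (Hzcv : forall m, Un_cv (fun n => z n m) 0).
  { intros m. rewrite <- (Hmp m). apply (orbit_cv (fun _ => 0) 0 (cv_const 0)).
    intros; unfold inI; lra. unfold inI; lra. }
  assert (HzI : forall n m, inI (-1) 1 (z n m)).
  { intros n m. apply (iter_I _ _ _ (Hfn n)). unfold inI; lra. }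
  set (s := fun n m j => vn n (iter j (fn n) (z n m)) / Dn j (fn n) (dln n) (drn n) (fn n (z n m))).
  assert (Hscv : forall m j, (j < p)%nat -> Un_cv (fun n => s n m j) (T f dl dr v j)).
  { intros m j Hj. unfold s, T. apply (s_cv (fun n => z n m) 0 j (Hzcv m) (fun n => HzI n m)).
    unfold inI; lra. intros k Hk. rewrite <- iter_Sr. apply Hnzp. lia. }
  assert (HDp : forall m, ev (fun n => Rabs (Dn p (fn n) (dln n) (drn n) (fn n (z n m))) >= G)).
  { intros m.
    assert (Hfz : Un_cv (fun n => fn n (z n m)) (f 0)).
    { apply (orbit_cv (fun n => z n m) 0 (Hzcv m) (fun n => HzI n m) ltac:(unfold inI; lra) 1). }
    assert (HfzI : forall n, inI (-1) 1 (fn n (z n m))) by (intros; apply (image_I _ _ _ (Hfn n)); auto).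
    assert (Hf0I : inI (-1) 1 (f 0)) by (apply (image_I _ _ _ Hf); unfold inI; lra).
    assert (HD1 : Un_cv (fun n => Dn (p - 1) (fn n) (dln n) (drn n) (fn n (z n m))) Lam).
    { apply Dn_cv; auto. intros k Hk. rewrite <- iter_Sr. apply Hnzp. lia. }
    assert (Hy : Un_cv (fun n => iter (p - 1) (fn n) (fn n (z n m))) 0).
    { replace 0 with (iter (p - 1) f (f 0)). apply orbit_cv; auto.
      rewrite <- iter_Sr. replace (S (p - 1)) with p by lia. apply Hpp. }
    assert (HyI : forall n, inI (-1) 1 (iter (p - 1) (fn n) (fn n (z n m)))).
    { intros n. apply (iter_I _ _ _ (Hfn n)). auto. }
    assert (HLpos : Rabs Lam > 0).
    { destruct (Rle_lt_dec (Rabs Lam) 0). assert (Rabs Lam = 0) by lra. unfold P in Hgood. rewrite H in Hgood. lra. lra. }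
    assert (Hmupos : mu > 0).
    { destruct (Rle_lt_dec mu 0). assert (mu = 0) by lra. unfold P in Hgood. rewrite H in Hgood. lra. lra. }
    set (e := Rmin (Rmin (Rabs Lam) mu) ((P - 2) / (2 * (Rabs Lam + mu)))).
    assert (He1 := Rmin_l (Rmin (Rabs Lam) mu) ((P - 2) / (2 * (Rabs Lam + mu)))).
    assert (He2 := Rmin_r (Rmin (Rabs Lam) mu) ((P - 2) / (2 * (Rabs Lam + mu)))).
    assert (He3 := Rmin_l (Rabs Lam) mu). assert (He4 := Rmin_r (Rabs Lam) mu).
    fold e in He1, He2.
    assert (Hepos : e > 0).
    { unfold e. apply Rmin_pos. apply Rmin_pos; lra. apply Rdiv_lt_0_compat; lra. }
    assert (He5 : e * (Rabs Lam + mu) <= (P - 2) / 2).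
    { apply Rle_trans with ((P - 2) / (2 * (Rabs Lam + mu)) * (Rabs Lam + mu)).
      apply Rmult_le_compat_r; lra. right; field; lra. }
    generalize (ev_and _ _ (cv_ev _ _ HD1 e Hepos) (near0 _ Hy HyI e Hepos)).
    apply ev_imp. intros n [A B].
    replace p with (S (p - 1)) at 1 by lia. simpl Dn. rewrite Rabs_mult.
    pose proof (Rabs_triang_inv Lam (Lam - Dn (p - 1) (fn n) (dln n) (drn n) (fn n (z n m)))).
    replace (Lam - (Lam - Dn (p - 1) (fn n) (dln n) (drn n) (fn n (z n m)))) with
      (Dn (p - 1) (fn n) (dln n) (drn n) (fn n (z n m))) in H by ring.
    rewrite <- Rabs_Ropp in A. rewrite Ropp_minus_distr in A.
    fold mu in B.
    assert (A' : Rabs (Dn (p - 1) (fn n) (dln n) (drn n) (fn n (z n m))) >= Rabs Lam - e) by lra.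
    apply Rle_ge. apply Rle_trans with ((Rabs Lam - e) * (mu - e)).
    unfold G, P in *. nra.
    apply Rmult_le_compat; lra. }
  apply Rabs_eq_0. apply Rle_antisym. 2: apply Rabs_pos.
  apply Rmult_le_reg_r with kap. auto. rewrite Rmult_0_l.
  apply le_eps. intros eps He. rewrite Rplus_0_l.
  destruct (small_tail M r HM Hr (eps/2) ltac:(lra)) as [K HK].
  set (B := S K).
  assert (HK' : M * (r ^ (B * p) / (1 - r)) < eps / 2) by (apply HK; unfold B; nia).
  set (epsb := eps * (1 - q) / 2).
  assert (Hepsb : epsb > 0) by (unfold epsb; apply Rdiv_lt_0_compat; nra).
  assert (Ea : ev (fun n => forall k, (k < B * p)%nat -> iter k f 0 <> 0 -> iter k (fn n) 0 <> 0)).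
  { apply ev_forall_lt. intros k Hk. destruct (Req_dec (iter k f 0) 0) as [E|E].
    apply ev_all. intros n Hn. contradiction.
    generalize (orbit0_ev k E). apply ev_imp. auto. }
  assert (Ec : ev (fun n => forall m, (m < B)%nat -> Rabs (fsum p (s n m) - S0) < epsb)).
  { apply ev_forall_lt. intros m Hm.
    apply (cv_ev _ _ (cv_fsum p (fun n => s n m) (T f dl dr v) (fun j Hj => Hscv m j Hj)) epsb Hepsb). }
  assert (Ed : ev (fun n => forall m, (m < B)%nat -> Rabs (Dn p (fn n) (dln n) (drn n) (fn n (z n m))) >= G)).
  { apply ev_forall_lt. intros m Hm. apply HDp. }
  destruct (ev_and _ _ Ea (ev_and _ _ Hbn (ev_and _ _ Ec Ed))) as [N HN].
  destruct (HN N (le_n N)) as [A [Bd [C D]]].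
  set (rho := fun m => / Dn (m * p) (fn N) (dln N) (drn N) (fn N 0)).
  set (beta := fun m => fsum p (s N m)).
  assert (Hdec : forall m, fsum (m * p) (T (fn N) (dln N) (drn N) (vn N)) = fsum m (fun k => rho k * beta k)).
  { intros m. rewrite fsum_blocks. apply fsum_ext. intros k Hk.
    unfold rho, beta. rewrite <- fsum_scal. apply fsum_ext. intros j Hj. rewrite T_block. reflexivity. }
  assert (Hest := block_est rho beta S0 q epsb B Hq ltac:(lra)
    ltac:(unfold rho; simpl; apply Rinv_1)
    ltac:(intros m Hm; unfold rho; rewrite Dn_block, Rinv_mult, Rabs_mult;
          fold (z N m); rewrite iter_comm; fold (z N m);
          specialize (D m Hm);
          assert (0 < Rabs (Dn p (fn N) (dln N) (drn N) (fn N (z N m)))) by lra;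
          rewrite Rmult_comm; apply Rmult_le_compat_r; [apply Rabs_pos|]; rewrite Rabs_inv;
          unfold q; apply Rinv_le_contravar; lra)
    ltac:(intros m Hm; left; apply C; auto)).
  assert (Hepsb2 : epsb / (1 - q) = eps / 2) by (unfold epsb; field; lra).
  fold kap in Hest. rewrite Hepsb2 in Hest.
  destruct (J_approx _ _ _ _ M r Hr Bd (B * p)) as [[L [HL1 [HL2 HL3]]]|HJn].
  - assert (HfL : iter L f 0 = 0).
    { destruct (Req_dec (iter L f 0) 0); auto. exfalso. apply (A L); auto. lia. }
    assert (HLm : (L mod p = 0)%nat).
    { destruct (Nat.eq_dec (L mod p) 0); auto. exfalso; apply (Hnzm L); auto. }
    assert (HLe : L = (L / p * p)%nat).
    { rewrite (Nat.div_mod_eq L p) at 1. rewrite HLm. lia. }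
    rewrite HJ, HLe, Hdec in HL3.
    assert (Hm1 : (1 <= L / p <= B)%nat).
    { split. destruct (Nat.eq_dec (L / p) 0) as [E|E]. rewrite E in HLe. simpl in HLe. lia. lia.
      apply Nat.lt_le_incl. apply Nat.div_lt_upper_bound. lia. lia. }
    specialize (Hest (L / p)%nat Hm1). rewrite <- HL3, Rabs_R0 in Hest. lra.
  - rewrite HJ, Hdec, Rminus_0_l, Rabs_Ropp in HJn.
    specialize (Hest B ltac:(unfold B; lia)). lra.
Qed.

End Main.

Theorem corollary3p1
  (f dl dr : R -> R) (fn dln drn : nat -> R -> R) (v : R -> R) (vn : nat -> R -> R) :
  pw_expanding_unimodal f dl dr ->
  good f dl dr ->
  (forall n, pw_expanding_unimodal (fn n) (dln n) (drn n)) ->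
  conv_B1 fn dln drn f dl dr ->
  in_B0 v -> (forall n, in_B0 (vn n)) ->
  conv_B0 vn v ->
  (forall n, J (fn n) (dln n) (drn n) (vn n) = 0) ->
  J f dl dr v = 0.
Proof.
  intros Hf Hg Hfn HB1 Hv Hvn HB0 HJ.
  destruct Hg as [Hnp|[p [Hp2 [Hpp Hgood]]]].
  - eapply case1; eauto.
  - eapply case2; eauto.
Qed.
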